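(* Let $I\subset\mathbb{R}$ be an open interval and let $\alpha:I\to\mathbb{R}$ be a smooth function with $\alpha>0$ and $\alpha'\neq 0$ on $I$. Consider the rotational surface $M$ in $(\mathbb{R}^3,\|\cdot\|)$ parametrized by $f(u,v)=(\alpha(u)\cos v,\ \alpha(u)\sin v,\ u)$, $u\in I$. Then $M$ is flat (i.e. its Minkowski Gaussian curvature $K$ vanishes identically) if and only if $\alpha(u)=au+b$ on $I$ for constants $a\neq 0$ and $b$, i.e. $M$ is (part of) a circular cone with axis the $x_3$-axis.
   Context: Fix an integer $m\ge 2$. Let $\Phi(x_1,x_2,x_3)=(x_1^2+x_2^2)^m+x_3^{2m}$ and let $\|\cdot\|$ be the norm on $\mathbb{R}^3$ whose unit sphere is $S=\{x\in\mathbb{R}^3:\Phi(x)=1\}$ (a smooth, strictly convex surface). For a real number $t$ and an integer $k$, $t^{k/(2m-1)}$ means $(t^{1/(2m-1)})^k$ with the real odd root. For a surface given by a parametrization $f(s,v)$, its Birkhoff–Gauss map $\eta$ is the map into $S$ defined by requiring $\eta\in S$ and $\nabla\Phi(\eta)=\mu\, f_s\times f_v$ for some function $\mu>0$, where $\times$ is the standard cross product (so the tangent plane of $S$ at $\eta(p)$ is parallel to $T_pM$, and $d\eta_p$ is an endomorphism of $T_pM$). The Minkowski Gaussian curvature is $K=\det(d\eta_p)$ and the Minkowski mean curvature is $H=\tfrac12\operatorname{trace}(d\eta_p)$. The surface is flat if $K\equiv 0$ and minimal if $H\equiv 0$. *)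

(* Defs.v *)
From Stdlib Require Import Reals Lra.
From Coquelicot Require Import Coquelicot.
Open Scope R_scope.

Definition R3 := (R * R * R)%type.
Definition c1 (x : R3) : R := fst (fst x).
Definition c2 (x : R3) : R := snd (fst x).
Definition c3 (x : R3) : R := snd x.
Definition mk3 (a b c : R) : R3 := (a, b, c).

Definition vadd (x y : R3) : R3 := mk3 (c1 x + c1 y) (c2 x + c2 y) (c3 x + c3 y).
Definition vscal (k : R) (x : R3) : R3 := mk3 (k * c1 x) (k * c2 x) (k * c3 x).
Definition cross (x y : R3) : R3 :=
  mk3 (c2 x * c3 y - c3 x * c2 y)
      (c3 x * c1 y - c1 x * c3 y)
      (c1 x * c2 y - c2 x * c1 y).

(** The function Phi(x) = (x1^2 + x2^2)^m + x3^(2m); its unit level set S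
    is the unit sphere of the norm. *)
Definition Phi (m : nat) (x : R3) : R :=
  (c1 x ^ 2 + c2 x ^ 2) ^ m + c3 x ^ (2 * m).

Definition gradPhi (m : nat) (x : R3) : R3 :=
  mk3 (Derive (fun t => Phi m (mk3 t (c2 x) (c3 x))) (c1 x))
      (Derive (fun t => Phi m (mk3 (c1 x) t (c3 x))) (c2 x))
      (Derive (fun t => Phi m (mk3 (c1 x) (c2 x) t)) (c3 x)).

Definition d_s (F : R -> R -> R3) (s v : R) : R3 :=
  mk3 (Derive (fun t => c1 (F t v)) s)
      (Derive (fun t => c2 (F t v)) s)
      (Derive (fun t => c3 (F t v)) s).
Definition d_v (F : R -> R -> R3) (s v : R) : R3 :=
  mk3 (Derive (fun t => c1 (F s t)) v)
      (Derive (fun t => c2 (F s t)) v)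
      (Derive (fun t => c3 (F s t)) v).

Definition is_BG_map (m : nat) (D : R -> R -> Prop) (F eta : R -> R -> R3) : Prop :=
  forall s v, D s v ->
    Phi m (eta s v) = 1 /\
    exists mu : R, mu > 0 /\ gradPhi m (eta s v) = vscal mu (cross (d_s F s v) (d_v F s v)).

(** k is the Minkowski Gaussian curvature det(d eta_p) at the point with
    parameters (s,v): the matrix [[a b];[c d]] of d eta_p in the basis
    (F_s, F_v) of T_pM, i.e. d eta(F_s) = eta_s = a F_s + c F_v and
    d eta(F_v) = eta_v = b F_s + d F_v, has determinant k. *)
Definition minkowski_K_at (F eta : R -> R -> R3) (s v k : R) : Prop :=
  exists a b c d : R,
    d_s eta s v = vadd (vscal a (d_s F s v)) (vscal c (d_v F s v)) /\
    d_v eta s v = vadd (vscal b (d_s F s v)) (vscal d (d_v F s v)) /\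
    k = a * d - b * c.

Definition is_flat (D : R -> R -> Prop) (F eta : R -> R -> R3) : Prop :=
  forall s v, D s v -> minkowski_K_at F eta s v 0.

Definition in_interval (lo hi : Rbar) (u : R) : Prop :=
  Rbar_lt lo u /\ Rbar_lt u hi.

Definition rot_surface (alpha : R -> R) (u v : R) : R3 :=
  mk3 (alpha u * cos v) (alpha u * sin v) u.

(* Main.v *)
Require Import Defs.
From Stdlib Require Import Reals Lra Lia.
From Coquelicot Require Import Coquelicot.
Require Import Defs.
Open Scope R_scope.

Lemma pow_lt_S (x y : R) (n : nat) : 0 <= x < y -> x ^ S n < y ^ S n.
Proof.
  intros [Hx Hxy]. induction n as [|n IH].
  - simpl. lra.
  - change (x ^ S (S n)) with (x * x ^ S n). change (y ^ S (S n)) with (y * y ^ S n).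
    assert (0 <= x ^ S n) by (apply pow_le; lra).
    nra.
Qed.

Lemma pow_pos_inj (x y : R) (n : nat) : 0 < x -> 0 < y -> x ^ S n = y ^ S n -> x = y.
Proof.
  intros Hx Hy H. destruct (Rtotal_order x y) as [H1|[H1|H1]]; auto.
  - pose proof (pow_lt_S x y n ltac:(lra)). lra.
  - pose proof (pow_lt_S y x n ltac:(lra)). lra.
Qed.

Lemma pow_odd_eq (x : R) (n : nat) : x ^ S (2 * n) = x * (x ^ 2) ^ n.
Proof. change (x ^ S (2*n)) with (x * x^(2*n)). rewrite pow_mult. reflexivity. Qed.

Lemma odd_lt (x y : R) (n : nat) : x < y -> x ^ S (2*n) < y ^ S (2*n).
Proof.
  intros H. destruct (Rle_dec 0 x).
  - apply pow_lt_S; lra.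
  - destruct (Rle_dec y 0).
    + pose proof (pow_lt_S (-y) (-x) (2*n) ltac:(lra)).
      rewrite !pow_odd_eq in *.
      replace ((-y)^2) with (y^2) in H0 by ring. replace ((-x)^2) with (x^2) in H0 by ring.
      lra.
    + rewrite !pow_odd_eq.
      assert (0 < (x^2)^n) by (apply pow_lt; nra).
      assert (0 < (y^2)^n) by (apply pow_lt; nra).
      nra.
Qed.

Lemma odd_inj (x y : R) (n : nat) : x ^ S (2*n) = y ^ S (2*n) -> x = y.
Proof.
  intros H. destruct (Rtotal_order x y) as [H1|[H1|H1]]; auto.
  - pose proof (odd_lt _ _ n H1). lra.
  - pose proof (odd_lt _ _ n H1). lra.
Qed.

Lemma rz_unique (n : nat) (s r z r' z' : R) :
  0 < r -> 0 < r' ->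
  z ^ S (2*n) = r ^ S (2*n) * s -> z' ^ S (2*n) = r' ^ S (2*n) * s ->
  r ^ (2 * S n) + z ^ (2 * S n) = 1 -> r' ^ (2 * S n) + z' ^ (2 * S n) = 1 ->
  r = r' /\ z = z'.
Proof.
  intros Hr Hr' H1 H2 H3 H4.
  assert (Hw : z / r = z' / r').
  { apply (odd_inj _ _ n). unfold Rdiv. rewrite !Rpow_mult_distr, !pow_inv, H1, H2.
    field. split; apply pow_nonzero; lra. }
  set (w := z / r) in *.
  assert (Ez : z = w * r) by (unfold w; field; lra).
  assert (Ez' : z' = w * r') by (rewrite Hw; field; lra).
  rewrite Ez, Rpow_mult_distr in H3. rewrite Ez', Rpow_mult_distr in H4.
  assert (Hq : 0 < 1 + w ^ (2 * S n)).
  { rewrite pow_mult. pose proof (pow_le (w^2) (S n) ltac:(nra)). lra. }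
  assert (E : r ^ (2 * S n) = r' ^ (2 * S n)).
  { apply (Rmult_eq_reg_r (1 + w ^ (2 * S n))); [|lra]. lra. }
  replace (2 * S n)%nat with (S (S (2 * n))) in E by lia.
  pose proof (pow_pos_inj _ _ _ Hr Hr' E) as Er. split; auto. rewrite Ez, Ez', Er; reflexivity.
Qed.

Lemma gradPhi_eq (n : nat) (x : R3) :
  gradPhi (S n) x =
  mk3 (INR (S n) * (c1 x ^ 2 + c2 x ^ 2) ^ n * (2 * c1 x))
      (INR (S n) * (c1 x ^ 2 + c2 x ^ 2) ^ n * (2 * c2 x))
      (INR (2 * S n) * c3 x ^ S (2 * n)).
Proof.
  unfold gradPhi, Phi, c1, c2, c3, mk3; simpl fst; simpl snd.
  f_equal; [f_equal|]; apply is_derive_unique; auto_derive; auto.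
  - change (match n with 0%nat => 1 | S _ => INR n + 1 end) with (INR (S n)).
    replace (fst (fst x) * (fst (fst x) * 1) + snd (fst x) * (snd (fst x) * 1)) with (fst (fst x) ^ 2 + snd (fst x) ^ 2) by ring. ring.
  - change (match n with 0%nat => 1 | S _ => INR n + 1 end) with (INR (S n)).
    replace (fst (fst x) * (fst (fst x) * 1) + snd (fst x) * (snd (fst x) * 1)) with (fst (fst x) ^ 2 + snd (fst x) ^ 2) by ring. ring.
  - replace (n + S (n + 0))%nat with (S (2*n)) by lia.
    replace (2 * S n)%nat with (S (S (2*n))) by lia.
    change (match S (2*n) with 0%nat => 1 | S _ => INR (S (2*n)) + 1 end) with (INR (S (S (2*n)))).
    rewrite (S_INR (S (2*n))). ring.
Qed.

Lemma d_s_rot (alpha : R -> R) u v : ex_derive alpha u ->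
  d_s (rot_surface alpha) u v = mk3 (Derive alpha u * cos v) (Derive alpha u * sin v) 1.
Proof.
  intros Ha. unfold d_s, rot_surface, c1, c2, c3, mk3; simpl fst; simpl snd.
  f_equal; [f_equal|]; apply is_derive_unique; auto_derive; auto; change (Derive (fun x => alpha x) u) with (Derive alpha u); ring.
Qed.

Lemma d_v_rot (alpha : R -> R) u v :
  d_v (rot_surface alpha) u v = mk3 (- alpha u * sin v) (alpha u * cos v) 0.
Proof.
  unfold d_v, rot_surface, c1, c2, c3, mk3; simpl fst; simpl snd.
  f_equal; [f_equal|]; apply is_derive_unique; auto_derive; auto; ring.
Qed.

Lemma bg_extract n (x : R3) (s al cv sv mu : R) : al > 0 -> mu > 0 -> cv^2 + sv^2 = 1 ->
  Phi (S n) x = 1 ->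
  gradPhi (S n) x = vscal mu (cross (mk3 (s*cv) (s*sv) 1) (mk3 (-al*sv) (al*cv) 0)) ->
  exists r z, 0 < r /\ x = mk3 (-r*cv) (-r*sv) z /\ z ^ S (2*n) = r ^ S (2*n) * s
    /\ r ^ (2 * S n) + z ^ (2 * S n) = 1.
Proof.
  intros Hal Hmu Hcs HPhi Hg.
  destruct x as [[x1 x2] x3].
  rewrite gradPhi_eq in Hg. unfold Phi, vscal, cross, c1, c2, c3, mk3 in *; cbn [fst snd] in *.
  pose proof (f_equal (fun p : R3 => fst (fst p)) Hg) as E1.
  pose proof (f_equal (fun p : R3 => snd (fst p)) Hg) as E2.
  pose proof (f_equal (fun p : R3 => snd p) Hg) as E3. cbn beta in E1, E2, E3. cbn [fst snd] in E1, E2, E3. clear Hg.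
  set (Q := x1 ^ 2 + x2 ^ 2) in *.
  assert (HN : 0 < INR (S n)) by (apply lt_0_INR; lia).
  rewrite mult_INR in E3. change (INR 2) with 2 in E3.
  set (lam := mu * al / (2 * INR (S n))).
  assert (Hlam : 0 < lam) by (unfold lam; apply Rdiv_lt_0_compat; nra).
  set (P := Q ^ n) in *.
  assert (F1 : x1 * P = - lam * cv).
  { transitivity ((INR (S n) * P * (2*x1)) / (2*INR (S n))); [field; lra|]. rewrite E1. unfold lam. field; lra. }
  assert (F2 : x2 * P = - lam * sv).
  { transitivity ((INR (S n) * P * (2*x2)) / (2*INR (S n))); [field; lra|]. rewrite E2. unfold lam. field; lra. }
  assert (F3 : x3 ^ S (2*n) = lam * s).
  { transitivity (((2 * INR (S n)) * x3 ^ S (2*n)) / (2*INR (S n))); [field; lra|]. rewrite E3. replace (s*cv*(al*cv) - s*sv*(-al*sv)) with (s*al*(cv^2+sv^2)) by ring. rewrite Hcs. unfold lam. field. lra. }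
  assert (HQ0 : 0 <= Q) by (unfold Q; nra).
  assert (HPQ : P * P * Q = lam * lam).
  { transitivity ((x1*P)^2 + (x2*P)^2); [unfold Q; ring|]. rewrite F1, F2.
    transitivity (lam*lam*(cv^2+sv^2)); [ring|]. rewrite Hcs; ring. }
  assert (HQ : 0 < Q).
  { destruct HQ0 as [H|H]; auto. rewrite <- H in HPQ. nra. }
  set (r := sqrt Q).
  assert (Hr : 0 < r) by (apply sqrt_lt_R0; auto).
  assert (Hr2 : r * r = Q) by (apply sqrt_sqrt; lra).
  assert (HP : P = r ^ (2*n)) by (unfold P; rewrite pow_mult, <- Hr2; f_equal; ring).
  assert (HPpos : 0 < P) by (rewrite HP; apply pow_lt; lra).
  assert (HrP : r * P = lam).
  { assert ((r*P - lam) * (r*P + lam) = 0) by (rewrite <- Hr2 in HPQ; nra).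
    assert (0 < r * P) by nra. nra. }
  exists r, x3. split; [auto|]. split; [|split].
  - assert (X1 : x1 = -r*cv) by (apply (Rmult_eq_reg_r P); [|lra]; rewrite F1, <- HrP; ring).
    assert (X2 : x2 = -r*sv) by (apply (Rmult_eq_reg_r P); [|lra]; rewrite F2, <- HrP; ring).
    rewrite <- X1, <- X2. reflexivity.
  - rewrite F3, <- HrP, HP. change (r ^ S (2*n)) with (r * r ^ (2*n)). ring.
  - rewrite <- HPhi. f_equal. rewrite pow_mult, <- Hr2. f_equal. ring.
Qed.

Lemma interval_nonempty lo hi : Rbar_lt lo hi -> exists u, in_interval lo hi u.
Proof.
  unfold in_interval. destruct lo as [a| |], hi as [b| |]; simpl; intros H; try contradiction.
  - exists ((a+b)/2). simpl. lra.
  - exists (a+1). simpl. lra.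
  - exists (b-1). simpl. lra.
  - exists 0. simpl. auto.
Qed.

Lemma in_interval_between lo hi a b x : in_interval lo hi a -> in_interval lo hi b ->
  Rmin a b <= x <= Rmax a b -> in_interval lo hi x.
Proof.
  unfold in_interval, Rmin, Rmax. destruct (Rle_dec a b);
  destruct lo as [l| |], hi as [h| |]; simpl; intros; lra.
Qed.

Lemma locally_I lo hi u : in_interval lo hi u -> locally u (in_interval lo hi).
Proof.
  intros Hu. apply (open_and _ _ (open_Rbar_gt lo) (open_Rbar_lt hi)). exact Hu.
Qed.

Lemma const_interval lo hi (g : R -> R) :
  (forall u, in_interval lo hi u -> is_derive g u 0) ->
  forall u1 u2, in_interval lo hi u1 -> in_interval lo hi u2 -> g u1 = g u2.
Proof.
  intros Hd u1 u2 H1 H2.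
  destruct (MVT_gen g u1 u2 (fun _ => 0)) as [c [_ Hc]].
  - intros x Hx. apply Hd. apply (in_interval_between lo hi u1 u2); auto; lra.
  - intros x Hx. apply continuity_pt_filterlim.
    assert (He : ex_derive g x) by (exists 0; apply Hd; apply (in_interval_between lo hi u1 u2); auto).
    exact (@ex_derive_continuous R_AbsRing R_NormedModule g x He).
  - lra.
Qed.

Lemma sign_locally (g : R -> R) u : continuous g u -> g u <> 0 ->
  exists sg, sg * sg = 1 /\ locally u (fun t => 0 < sg * g t).
Proof.
  intros Hc Hn. destruct (Rlt_dec 0 (g u)) as [Hp|Hp].
  - exists 1. split; [ring|].
    apply (Hc (fun y => 0 < 1 * y)).
    eapply filter_imp; [|apply (open_gt 0); exact Hp]. simpl; intros; lra.
  - exists (-1). split; [ring|].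
    apply (Hc (fun y => 0 < -1 * y)).
    eapply filter_imp; [|apply (open_lt 0); lra]. simpl; intros; lra.
Qed.

Lemma mk3_eq a b c a' b' c' : a = a' -> b = b' -> c = c' -> mk3 a b c = mk3 a' b' c'.
Proof. intros; subst; reflexivity. Qed.

Lemma Rpower_pos x y : 0 < Rpower x y.
Proof. unfold Rpower. apply exp_pos. Qed.

Lemma candidate n (sg s : R) : sg * sg = 1 -> 0 < sg * s ->
  let W := Rpower (sg * s) (/ INR (S (2*n))) in
  let rr := Rpower (1 + W ^ (2 * S n)) (- / INR (2 * S n)) in
  0 < rr /\ (sg * W * rr) ^ S (2*n) = rr ^ S (2*n) * s /\
  rr ^ (2 * S n) + (sg * W * rr) ^ (2 * S n) = 1.
Proof.
  intros Hsg Hs W rr.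
  assert (HW : 0 < W) by apply Rpower_pos.
  assert (HA : 0 < 1 + W ^ (2 * S n)) by (pose proof (pow_lt W (2 * S n) HW); lra).
  assert (Hk : 0 < INR (S (2*n))) by (apply lt_0_INR; lia).
  assert (HN : 0 < INR (2 * S n)) by (apply lt_0_INR; lia).
  assert (Wk : W ^ S (2*n) = sg * s).
  { rewrite <- Rpower_pow by exact HW. unfold W. rewrite Rpower_mult.
    replace (/ INR (S (2 * n)) * INR (S (2 * n))) with 1 by (field; lra).
    apply Rpower_1; auto. }
  assert (sgk : sg ^ S (2*n) = sg).
  { rewrite pow_odd_eq. replace (sg ^ 2) with 1 by (simpl; lra). rewrite pow1; ring. }
  assert (sgN : sg ^ (2 * S n) = 1).
  { rewrite pow_mult. replace (sg ^ 2) with 1 by (simpl; lra). apply pow1. }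
  assert (rrN : rr ^ (2 * S n) = / (1 + W ^ (2 * S n))).
  { rewrite <- Rpower_pow by apply Rpower_pos. unfold rr. rewrite Rpower_mult.
    replace (- / INR (2 * S n) * INR (2 * S n)) with (Ropp 1) by (field; lra).
    rewrite Rpower_Ropp, Rpower_1; auto. }
  split; [apply Rpower_pos|]. split.
  - rewrite !Rpow_mult_distr, Wk, sgk. transitivity (sg * sg * s * rr ^ S (2*n)); [ring|].
    rewrite Hsg; ring.
  - rewrite !Rpow_mult_distr, sgN, rrN. field. lra.
Qed.

Lemma rep n lo hi alpha eta :
  (forall u, in_interval lo hi u -> ex_derive alpha u) ->
  (forall u, in_interval lo hi u -> alpha u > 0) ->
  is_BG_map (S n) (fun u v => in_interval lo hi u) (rot_surface alpha) eta ->
  forall u v, in_interval lo hi u -> exists r z, 0 < r /\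
    eta u v = mk3 (- r * cos v) (- r * sin v) z /\
    z ^ S (2*n) = r ^ S (2*n) * Derive alpha u /\ r ^ (2 * S n) + z ^ (2 * S n) = 1.
Proof.
  intros Hd Hp HBG u v Hu.
  destruct (HBG u v Hu) as [HPhi [mu [Hmu Hg]]].
  rewrite d_s_rot, d_v_rot in Hg by auto.
  apply (bg_extract n (eta u v) (Derive alpha u) (alpha u) (cos v) (sin v) mu); auto.
  rewrite <- (sin2_cos2 v). unfold Rsqr. ring.
Qed.

Lemma rep_all n lo hi alpha eta :
  (forall u, in_interval lo hi u -> ex_derive alpha u) ->
  (forall u, in_interval lo hi u -> alpha u > 0) ->
  is_BG_map (S n) (fun u v => in_interval lo hi u) (rot_surface alpha) eta ->
  forall u, in_interval lo hi u -> exists r z, 0 < r /\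
    (forall v, eta u v = mk3 (- r * cos v) (- r * sin v) z) /\
    z ^ S (2*n) = r ^ S (2*n) * Derive alpha u /\ r ^ (2 * S n) + z ^ (2 * S n) = 1.
Proof.
  intros Hd Hp HBG u Hu.
  destruct (rep n lo hi alpha eta Hd Hp HBG u 0 Hu) as [r [z [Hr [_ [H1 H2]]]]].
  exists r, z. split; [auto|]. split; [|auto].
  intros v. destruct (rep n lo hi alpha eta Hd Hp HBG u v Hu) as [r' [z' [Hr' [E [H1' H2']]]]].
  destruct (rz_unique n _ _ _ _ _ Hr Hr' H1 H1' H2 H2') as [-> ->]. exact E.
Qed.

Lemma rep_same n lo hi alpha eta :
  (forall u, in_interval lo hi u -> ex_derive alpha u) ->
  (forall u, in_interval lo hi u -> alpha u > 0) ->
  is_BG_map (S n) (fun u v => in_interval lo hi u) (rot_surface alpha) eta ->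
  forall u u' v, in_interval lo hi u -> in_interval lo hi u' ->
  Derive alpha u = Derive alpha u' -> eta u v = eta u' v.
Proof.
  intros Hd Hp HBG u u' v Hu Hu' Heq.
  destruct (rep n lo hi alpha eta Hd Hp HBG u v Hu) as [r [z [Hr [E [H1 H2]]]]].
  destruct (rep n lo hi alpha eta Hd Hp HBG u' v Hu') as [r' [z' [Hr' [E' [H1' H2']]]]].
  rewrite Heq in H1.
  destruct (rz_unique n _ _ _ _ _ Hr Hr' H1 H1' H2 H2') as [-> ->]. congruence.
Qed.

Lemma d_v_eta (eta : R -> R -> R3) u r z :
  (forall v, eta u v = mk3 (- r * cos v) (- r * sin v) z) ->
  forall v, d_v eta u v = mk3 (r * sin v) (- r * cos v) 0.
Proof.
  intros E v. unfold d_v.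
  rewrite (Derive_ext _ (fun t => - r * cos t)) by (intros t; rewrite E; reflexivity).
  rewrite (Derive_ext (fun t => c2 (eta u t)) (fun t => - r * sin t)) by (intros t; rewrite E; reflexivity).
  rewrite (Derive_ext (fun t => c3 (eta u t)) (fun t => z)) by (intros t; rewrite E; reflexivity).
  apply mk3_eq; [| |apply Derive_const]; apply is_derive_unique; auto_derive; auto; ring.
Qed.

Lemma vadd_mk3 a b x1 x2 x3 y1 y2 y3 :
  vadd (vscal a (mk3 x1 x2 x3)) (vscal b (mk3 y1 y2 y3)) =
  mk3 (a*x1+b*y1) (a*x2+b*y2) (a*x3+b*y3).
Proof. reflexivity. Qed.

Lemma c1_mk3 a b c : c1 (mk3 a b c) = a. Proof. reflexivity. Qed.
Lemma c2_mk3 a b c : c2 (mk3 a b c) = b. Proof. reflexivity. Qed.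
Lemma c3_mk3 a b c : c3 (mk3 a b c) = c. Proof. reflexivity. Qed.

Theorem proposition3p1 (m : nat) (lo hi : Rbar) (alpha : R -> R)
  (eta : R -> R -> R3) :
  (2 <= m)%nat ->
  Rbar_lt lo hi ->
  (* alpha smooth on I *)
  (forall (n : nat) (u : R), in_interval lo hi u -> ex_derive (Derive_n alpha n) u) ->
  (forall u, in_interval lo hi u -> alpha u > 0) ->
  (forall u, in_interval lo hi u -> Derive alpha u <> 0) ->
  is_BG_map m (fun u v => in_interval lo hi u) (rot_surface alpha) eta ->
  (is_flat (fun u v => in_interval lo hi u) (rot_surface alpha) eta <->
   exists a b : R, a <> 0 /\ forall u, in_interval lo hi u -> alpha u = a * u + b).
Proof.
  intros Hm Hlh Hsm Hpos Hnz HBG.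
  destruct m as [|n]; [lia|].
  assert (Hd : forall u, in_interval lo hi u -> ex_derive alpha u)
    by (intros u Hu; exact (Hsm 0%nat u Hu)).
  assert (Hd1 : forall u, in_interval lo hi u -> ex_derive (Derive alpha) u)
    by (intros u Hu; exact (Hsm 1%nat u Hu)).
  split.
  - intros Hflat.
    set (Z := fun t => c3 (eta t (PI/2))).
    assert (HZ0 : forall u, in_interval lo hi u -> Derive Z u = 0).
    { intros u Hu.
      destruct (rep_all n lo hi alpha eta Hd Hpos HBG u Hu) as [r [z [Hr [E _]]]].
      destruct (Hflat u (PI/2) Hu) as [a [b [c [d [Es [Ev Ek]]]]]].
      rewrite (d_v_eta eta u r z E), d_s_rot, d_v_rot, sin_PI2, cos_PI2 in Ev by auto.
      rewrite d_s_rot, d_v_rot, sin_PI2, cos_PI2 in Es by auto.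
      pose proof (f_equal c1 Ev) as Ev1. pose proof (f_equal c3 Ev) as Ev3.
      pose proof (f_equal c3 Es) as Es3.
      unfold vadd, vscal, d_s, c1, c2, c3, mk3 in Ev1, Ev3, Es3. cbn [fst snd] in Ev1, Ev3, Es3.
      assert (Hb : b = 0) by lra.
      assert (Hal := Hpos u Hu).
      assert (Hdn : d <> 0) by (intro Hd0; subst; nra).
      assert (Ha : a = 0).
      { subst b. assert (a * d = 0) by lra. destruct (Rmult_integral _ _ H); auto. contradiction. }
      unfold Z, c3. rewrite Es3. subst a. ring. }
    assert (HZd : forall u, in_interval lo hi u -> ex_derive Z u).
    { intros u Hu.
      destruct (sign_locally (Derive alpha) u) as [sg [Hsg Hloc]].
      + exact (@ex_derive_continuous R_AbsRing R_NormedModule _ u (Hd1 u Hu)).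
      + apply Hnz; auto.
      + set (W := fun t => Rpower (sg * Derive alpha t) (/ INR (S (2*n)))).
        apply (ex_derive_ext_loc (fun t => sg * W t * Rpower (1 + W t ^ (2*S n)) (- / INR (2 * S n)))).
        * generalize (filter_and _ _ Hloc (locally_I lo hi u Hu)). apply filter_imp.
          intros t [Ht1 Ht2].
          destruct (rep n lo hi alpha eta Hd Hpos HBG t (PI/2) Ht2) as [r [z [Hr [E [H1 H2]]]]].
          destruct (candidate n sg (Derive alpha t) Hsg Ht1) as [Hc0 [Hc1 Hc2]].
          destruct (rz_unique n _ _ _ _ _ Hc0 Hr Hc1 H1 Hc2 H2) as [_ Hzz].
          unfold Z. rewrite E, c3_mk3. rewrite <- Hzz. reflexivity.
        * pose proof (locally_singleton _ _ Hloc) as Hu0. simpl in Hu0.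
          unfold W, Rpower. auto_derive. repeat split; auto.
          match goal with |- 0 < 1 + ?e * ?e ^ ?k =>
            assert (He : 0 < e) by apply exp_pos; pose proof (pow_lt e k He); nra end. }
    assert (HZc : forall u1 u2, in_interval lo hi u1 -> in_interval lo hi u2 -> Z u1 = Z u2).
    { apply (const_interval lo hi Z). intros u Hu. rewrite <- (HZ0 u Hu).
      apply Derive_correct. auto. }
    assert (Hac : forall u1 u2, in_interval lo hi u1 -> in_interval lo hi u2 ->
                   Derive alpha u1 = Derive alpha u2).
    { intros u1 u2 H1 H2.
      destruct (rep n lo hi alpha eta Hd Hpos HBG u1 (PI/2) H1) as [r1 [z1 [Hr1 [E1 [F1 G1]]]]].
      destruct (rep n lo hi alpha eta Hd Hpos HBG u2 (PI/2) H2) as [r2 [z2 [Hr2 [E2 [F2 G2]]]]].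
      assert (Hz : z1 = z2).
      { pose proof (HZc u1 u2 H1 H2) as H. unfold Z in H. rewrite E1, E2, !c3_mk3 in H. exact H. }
      subst z2.
      assert (H : r1 ^ (2 * S n) = r2 ^ (2 * S n)) by lra.
      replace (2 * S n)%nat with (S (S (2*n))) in H by lia.
      pose proof (pow_pos_inj _ _ _ Hr1 Hr2 H) as Hr. subst r2.
      assert (r1 ^ S (2*n) <> 0) by (apply pow_nonzero; lra).
      apply (Rmult_eq_reg_l (r1 ^ S (2*n))); [|exact H0]. rewrite <- F1, <- F2. reflexivity. }
    destruct (interval_nonempty lo hi Hlh) as [u0 Hu0].
    exists (Derive alpha u0), (alpha u0 - Derive alpha u0 * u0).
    split; [apply Hnz; auto|].
    intros u Hu.
    assert (alpha u - Derive alpha u0 * u = alpha u0 - Derive alpha u0 * u0).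
    { apply (const_interval lo hi (fun t => alpha t - Derive alpha u0 * t)); auto.
      intros t Ht. auto_derive; auto.
      change (Derive (fun x => alpha x) t) with (Derive alpha t). rewrite (Hac t u0 Ht Hu0). ring. }
    lra.
  - intros [a [b [Ha Hlin]]].
    assert (HDa : forall u, in_interval lo hi u -> Derive alpha u = a).
    { intros u Hu. rewrite (Derive_ext_loc _ (fun t => a * t + b)).
      - apply is_derive_unique; auto_derive; auto; ring.
      - eapply filter_imp; [|apply (locally_I lo hi u Hu)]. intros t Ht; apply Hlin; auto. }
    intros u v Hu.
    destruct (rep_all n lo hi alpha eta Hd Hpos HBG u Hu) as [r [z [Hr [E _]]]].
    assert (Hl : locally u (fun t => eta t v = eta u v)).
    { eapply filter_imp; [|apply (locally_I lo hi u Hu)]. intros t Ht.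
      apply (rep_same n lo hi alpha eta Hd Hpos HBG); auto. rewrite !HDa; auto. }
    assert (Hs : d_s eta u v = mk3 0 0 0).
    { unfold d_s. apply mk3_eq.
      - rewrite (Derive_ext_loc _ (fun _ => c1 (eta u v))); [apply Derive_const|].
        eapply filter_imp; [|exact Hl]; intros t Ht; rewrite Ht; reflexivity.
      - rewrite (Derive_ext_loc _ (fun _ => c2 (eta u v))); [apply Derive_const|].
        eapply filter_imp; [|exact Hl]; intros t Ht; rewrite Ht; reflexivity.
      - rewrite (Derive_ext_loc _ (fun _ => c3 (eta u v))); [apply Derive_const|].
        eapply filter_imp; [|exact Hl]; intros t Ht; rewrite Ht; reflexivity. }
    assert (Hal := Hpos u Hu).
    exists 0, 0, 0, (- r / alpha u).
    split; [|split].
    + rewrite Hs, d_s_rot, d_v_rot by auto. rewrite vadd_mk3. apply mk3_eq; ring.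
    + rewrite (d_v_eta eta u r z E), d_s_rot, d_v_rot by auto. rewrite vadd_mk3. apply mk3_eq; field; lra.
    + ring.
Qed.
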